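(* Let $G$ be a finite group and $n\ge1$, and let $a_1,\dots,a_{2n}$ be independent uniformly random elements of $G$. Then \[ Pr(a_{2n}a_{2n-1}\cdots a_1=a_1a_2\cdots a_{2n})=\frac{\sum_{x_1,\dots,x_n\in G}|Stab.Prod_n(x_1,\dots,x_n)|}{|G|^{2n}} \] and \[ Pr(a_{2n}a_{2n-1}\cdots a_1=a_1a_2\cdots a_{2n})=\sum_{i_1,\dots,i_n,j=1}^{c(G)}\frac{|\Omega_j|\cdot c_{i_1,\dots,i_n;j}(G)^2}{|\Omega_{i_1}|\cdots|\Omega_{i_n}|\cdot|G|^n}. \]
   Context: $c(G)$ is the number of conjugacy classes of $G$, and $\Omega_1,\dots,\Omega_{c(G)}$ are these classes. For $g_1,\dots,g_n\in G$, $Stab.Prod_n(g_1,\dots,g_n)$ is the set of all tuples $(b_1,\dots,b_n)\in G^n$ with $b_1^{-1}g_1b_1\cdot b_2^{-1}g_2b_2\cdots b_n^{-1}g_nb_n=g_1g_2\cdots g_n$. $c_{i_1,\dots,i_n;j}(G)$ is the number of tuples $(x_1,\dots,x_n)$ with $x_t\in\Omega_{i_t}$ for all $t$ and $x_1x_2\cdots x_n=y$, for a fixed $y\in\Omega_j$. This number is independent of the choice of $y$. *)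

(* Defs.v *)
From HB Require Import structures.
From mathcomp Require Import all_boot all_order all_algebra all_fingroup.
Set Implicit Arguments. Unset Strict Implicit. Unset Printing Implicit Defensive.
Import GRing.Theory.

Definition seqprod (gT : finGroupType) (m : nat) (a : {ffun 'I_m -> gT}) : gT :=
  (\prod_(i < m) a i)%g.

Definition revprod (gT : finGroupType) (m : nat) (a : {ffun 'I_m -> gT}) : gT :=
  (\prod_(i < m) a (rev_ord i))%g.

Definition tuples_in (gT : finGroupType) (G : {set gT}) (m : nat) :=
  [set a : {ffun 'I_m -> gT} | [forall i, a i \in G]].

Definition revProbability (gT : finGroupType) (G : {group gT}) (n : nat) : rat :=
  (#|[set a in tuples_in G (2 * n) | revprod a == seqprod a]|%:R
    / (#|G| ^ (2 * n))%:R)%R.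

(* Stab.Prod_n(x_1,...,x_n) = {(b_1..b_n) in G^n | prod b_t^-1 x_t b_t = prod x_t}.
   In mathcomp, x ^ b = b^-1 * x * b. *)
Definition StabProd (gT : finGroupType) (G : {group gT}) (n : nat)
    (x : {ffun 'I_n -> gT}) : {set {ffun 'I_n -> gT}} :=
  [set b in tuples_in G n |
     (\prod_(t < n) (x t ^ b t))%g == seqprod x].

(* c_{i_1..i_n; j}(G): number of (x_1..x_n) with x_t in Omega_{i_t} and
   x_1...x_n = y, for the fixed representative y = repr Omega_j. *)
Definition classProdCount (gT : finGroupType) (n : nat)
    (C : {ffun 'I_n -> {set gT}}) (D : {set gT}) : nat :=
  #|[set x : {ffun 'I_n -> gT} | [forall t, x t \in C t] && (seqprod x == repr D)]|.

(* Main.v *)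
Require Import Defs.
From HB Require Import structures.
From mathcomp Require Import all_boot all_order all_algebra all_fingroup.
From mathcomp Require Import zify ring.
Import GRing.Theory.
Set Implicit Arguments. Unset Strict Implicit. Unset Printing Implicit Defensive.

Section Gen.
Variable gT : finGroupType.

Lemma card_bij (I J : finType) (h : I -> J) (Q : pred J) :
  bijective h -> #|[set j | Q j]| = #|[set i | Q (h i)]|.
Proof.
move=> bh; rewrite -!sum1_card (reindex h) /=; last by apply: onW_bij.
by apply: eq_bigl => i; rewrite !inE.
Qed.

Lemma card_pair (I J : finType) (P : pred I) (Q : I -> pred J) :
  #|[set p : I * J | P p.1 && Q p.1 p.2]| = \sum_(i | P i) #|[set j | Q i j]|.
Proof.
rewrite -sum1_card (eq_bigl (fun p : I * J => P p.1 && Q p.1 p.2)); last first.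
  by move=> p; rewrite inE.
rewrite [RHS](eq_bigr (fun i => \sum_(j | Q i j) 1)); last first.
  by move=> i _; rewrite -sum1_card; apply: eq_bigl => j; rewrite inE.
by rewrite pair_big_dep.
Qed.

Definition prodset m (S : 'I_m -> {set gT}) :=
  [set a : {ffun 'I_m -> gT} | [forall i, a i \in S i]].

Definition ext m (b : {ffun 'I_m -> gT}) (c : gT) : {ffun 'I_m.+1 -> gT} :=
  [ffun i : 'I_m.+1 => if insub (val i) is Some j then b j else c].

Definition restr m (b : {ffun 'I_m.+1 -> gT}) : {ffun 'I_m -> gT} :=
  [ffun j => b (widen_ord (leqnSn m) j)].

Lemma ext_widen m b c (j : 'I_m) : ext b c (widen_ord (leqnSn m) j) = b j.
Proof.
rewrite ffunE; case: insubP => [j' _ /val_inj -> //|]; by rewrite /= ltn_ord.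
Qed.

Lemma ext_max m b c : ext b c (@ord_max m) = c.
Proof. by rewrite ffunE insubF //= ltnn. Qed.

Lemma restr_ext m b c : restr (@ext m b c) = b.
Proof. by apply/ffunP => j; rewrite ffunE ext_widen. Qed.

Lemma ext_restr m (b : {ffun 'I_m.+1 -> gT}) : ext (restr b) (b ord_max) = b.
Proof.
apply/ffunP => i; rewrite ffunE; case: insubP => [j _ vj|].
  by rewrite ffunE; congr (b _); apply: val_inj.
move=> hi; congr (b _); apply: val_inj => /=.
have := ltn_ord i; rewrite ltnS => h1; apply/eqP; by rewrite eqn_leq h1 leqNgt hi.
Qed.


Lemma ext_in m (S : 'I_m.+1 -> {set gT}) b c :
  (ext b c \in prodset S) =
  (c \in S ord_max) && (b \in prodset (fun j => S (widen_ord (leqnSn m) j))).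
Proof.
apply/idP/andP => [|[hc hb]].
  rewrite inE => /forallP h; split; first by have := h ord_max; rewrite ext_max.
  by rewrite inE; apply/forallP => j; have := h (widen_ord (leqnSn m) j); rewrite ext_widen.
rewrite inE; apply/forallP => i; rewrite ffunE; case: insubP => [j _ vj|hi].
  move: hb; rewrite inE => /forallP /(_ j); congr (_ \in S _); exact: val_inj.
have -> : i = ord_max; last by [].
apply: val_inj => /=; have := ltn_ord i; rewrite ltnS => h1; apply/eqP.
by rewrite eqn_leq h1 leqNgt hi.
Qed.

Lemma card_split m (S : 'I_m.+1 -> {set gT}) (P : pred {ffun 'I_m.+1 -> gT}) :
  #|[set b in prodset S | P b]| =
  \sum_(c in S ord_max)
     #|[set b in prodset (fun j => S (widen_ord (leqnSn m) j)) | P (ext b c)]|.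
Proof.
have bh : bijective (fun p : gT * {ffun 'I_m -> gT} => ext p.2 p.1).
  exists (fun b : {ffun 'I_m.+1 -> gT} => (b ord_max, restr b)) => [[c b]|b] /=.
    by rewrite ext_max restr_ext.
  exact: ext_restr.
rewrite (card_bij (fun b => (b \in prodset S) && P b) bh).
rewrite -(card_pair (fun c => c \in S ord_max)
   (fun c b => (b \in prodset (fun j => S (widen_ord (leqnSn m) j))) && P (ext b c))).
by congr #|pred_of_set _|; apply/setP => [[c b]]; rewrite in_set [in RHS]in_set /= ext_in andbA.
Qed.

End Gen.

Section Counts.
Variables (gT : finGroupType) (G : {group gT}).

Definition Fc n (x : {ffun 'I_n -> gT}) (g : gT) :=
  #|[set b in tuples_in G n | (\prod_(t < n) (x t ^ b t))%g == g]|.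
Definition Rc n (x : {ffun 'I_n -> gT}) (g : gT) :=
  #|[set b in tuples_in G n |
      (\prod_(t < n) (x (rev_ord t) ^ b (rev_ord t)))%g == g]|.

Lemma eq_mulgr (a y g : gT) : ((a * y)%g == g) = (a == g * y^-1)%g.
Proof. by apply/eqP/eqP => [<-|->]; rewrite ?mulgK ?mulgKV. Qed.
Lemma eq_mulgl (a y g : gT) : ((y * a)%g == g) = (a == y^-1 * g)%g.
Proof. by apply/eqP/eqP => [<-|->]; rewrite ?mulKg ?mulKVg. Qed.

Lemma tuples_prodset n : tuples_in G n = prodset (fun _ : 'I_n => (G : {set gT})).
Proof. by []. Qed.

Lemma rev_ord0 n : rev_ord (@ord0 n) = ord_max.
Proof. by apply: val_inj => /=; rewrite subSS subn0. Qed.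

Lemma rev_ord_lift n (i : 'I_n) :
  rev_ord (lift ord0 i) = widen_ord (leqnSn n) (rev_ord i).
Proof. by apply: val_inj => /=; rewrite /bump /= add1n subSS. Qed.

Lemma Fc_step n x g :
  Fc x g = \sum_(c in G) Fc (restr x) (g * (x (@ord_max n) ^ c)^-1)%g.
Proof.
rewrite /Fc tuples_prodset card_split; apply: eq_bigr => c _.
congr #|pred_of_set _|; apply/setP => b; rewrite !in_set; congr (_ && _).
rewrite big_ord_recr /= ext_max eq_mulgr; congr (_ == _).
by apply: eq_bigr => i _; rewrite ext_widen ffunE.
Qed.

Lemma Rc_step n x g :
  Rc x g = \sum_(c in G) Rc (restr x) ((x (@ord_max n) ^ c)^-1 * g)%g.
Proof.
rewrite /Rc tuples_prodset card_split; apply: eq_bigr => c _.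
congr #|pred_of_set _|; apply/setP => b; rewrite !in_set; congr (_ && _).
rewrite big_ord_recl /= rev_ord0 ext_max eq_mulgl; congr (_ == _).
by apply: eq_bigr => i _; rewrite rev_ord_lift ext_widen ffunE.
Qed.

End Counts.

Section Inv.
Variables (gT : finGroupType) (G : {group gT}).

Definition Gc n (f : 'I_n -> 'I_n) (x : {ffun 'I_n -> gT}) (g : gT) :=
  #|[set b in tuples_in G n | (\prod_(t < n) (x (f t) ^ b (f t)))%g == g]|.

Lemma Gc_conj n f x g k : k \in G -> @Gc n f x (g ^ k)%g = Gc f x g.
Proof.
move=> kG.
have bh : bijective (fun b : {ffun 'I_n -> gT} => [ffun t => b t * k]%g).
  exists (fun b : {ffun 'I_n -> gT} => [ffun t => b t * k^-1]%g) => b;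
  by apply/ffunP => t; rewrite !ffunE ?mulgK ?mulgKV.
rewrite /Gc (card_bij _ bh); congr #|pred_of_set _|; apply/setP => b.
rewrite !in_set; congr (_ && _).
  by apply/forallP/forallP => h t; have := h t; rewrite ffunE groupMr.
under eq_bigr => t _ do rewrite ffunE conjgM.
by rewrite -conjg_prod (inj_eq (@conjg_inj _ k)).
Qed.

Lemma Rc_Fc n (x : {ffun 'I_n -> gT}) g :
  (forall t, x t \in G) -> Rc G x g = Fc G x g.
Proof.
elim: n x g => [|n IH] x g xG; first by apply: eq_card => b; rewrite !in_set !big_ord0.
rewrite Rc_step Fc_step; apply: eq_bigr => c cG.
have xr : forall t, restr x t \in G by move=> t; rewrite ffunE.
rewrite IH //.
set y := (x ord_max ^ c)%g.
have yG : y \in G by rewrite groupJ.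
have -> : (g * y^-1 = (y^-1 * g) ^ (y^-1))%g.
  by rewrite conjgE invgK !mulgA mulgV mul1g.
symmetry; exact: (@Gc_conj n (fun t => t) (restr x) _ _ (groupVr yG)).
Qed.

End Inv.

Section Pairs.
Variables (gT : finGroupType) (G : {group gT}).

Lemma prod_pairs_nat (f : nat -> gT) n :
  (\prod_(0 <= i < (2 * n)%N) f i = \prod_(0 <= t < n) (f (2 * t)%N * f (2 * t)%N.+1))%g.
Proof.
elim: n => [|n IH]; first by rewrite muln0 !big_geq.
have -> : 2 * n.+1 = (2 * n).+2 by lia.
by rewrite !big_nat_recr //= IH mulgA.
Qed.

Definition ev n (t : 'I_n) : 'I_(2 * n) :=
  @Ordinal (2 * n) (2 * t) (ltac:(have := ltn_ord t; lia)).
Definition od n (t : 'I_n) : 'I_(2 * n) :=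
  @Ordinal (2 * n) (2 * t).+1 (ltac:(have := ltn_ord t; lia)).
Definition half n (i : 'I_(2 * n)) : 'I_n :=
  @Ordinal n i./2 (ltac:(rewrite ltn_half_double -mul2n; exact: ltn_ord)).

Lemma prod_pairs n (F : 'I_(2 * n) -> gT) :
  (\prod_(i < (2 * n)%N) F i = \prod_(t < n) (F (ev t) * F (od t)))%g.
Proof.
pose f := fun i : nat => if insub i is Some j then F j else 1%g.
have -> : (\prod_(i < (2 * n)%N) F i = \prod_(i < (2 * n)%N) f i)%g.
  by apply: eq_bigr => i _; rewrite /f valK.
rewrite -(big_mkord xpredT f) prod_pairs_nat big_mkord.
apply: eq_bigr => t _.
by rewrite /f -[2 * t]/(val (ev t)) -[(2 * t).+1]/(val (od t)) !valK.
Qed.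

Lemma half_ev n (t : 'I_n) : half (ev t) = t.
Proof. by apply: val_inj => /=; rewrite mul2n doubleK. Qed.
Lemma half_od n (t : 'I_n) : half (od t) = t.
Proof. by apply: val_inj => /=; rewrite mul2n; exact: uphalf_double. Qed.
Lemma odd_ev n (t : 'I_n) : odd (ev t) = false.
Proof. by rewrite /= mul2n odd_double. Qed.
Lemma odd_od n (t : 'I_n) : odd (od t) = true.
Proof. by rewrite /= mul2n odd_double. Qed.
Lemma half_odd n (i : 'I_(2 * n)) :
  (if odd i then od (half i) else ev (half i)) = i.
Proof.
apply: val_inj; have := odd_double_half i; case: (odd i) => /= h; lia.
Qed.
Lemma rev_ev n (t : 'I_n) : rev_ord (ev t) = od (rev_ord t).
Proof. apply: val_inj => /=; have := ltn_ord t; lia. Qed.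
Lemma rev_od n (t : 'I_n) : rev_ord (od t) = ev (rev_ord t).
Proof. apply: val_inj => /=; have := ltn_ord t; lia. Qed.

End Pairs.

Section StepA.
Variables (gT : finGroupType) (G : {group gT}).

Definition kmap n (p : {ffun 'I_n -> gT} * {ffun 'I_n -> gT}) : {ffun 'I_(2 * n) -> gT} :=
  [ffun i : 'I_(2 * n) => if odd i then ((p.2 (half i))^-1 * p.1 (half i))%g else p.2 (half i)].

Lemma kmap_ev n p (t : 'I_n) : kmap p (ev t) = p.2 t.
Proof. by rewrite ffunE odd_ev half_ev. Qed.
Lemma kmap_od n p (t : 'I_n) : kmap p (od t) = ((p.2 t)^-1 * p.1 t)%g.
Proof. by rewrite ffunE odd_od half_od. Qed.

Lemma kmap_bij n : bijective (@kmap n).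
Proof.
exists (fun a : {ffun 'I_(2 * n) -> gT} =>
   ([ffun t => a (ev t) * a (od t)]%g, [ffun t => a (ev t)])).
  move=> [x u]; congr (_, _); apply/ffunP => t; rewrite [LHS]ffunE ?kmap_ev ?kmap_od //=.
  by rewrite mulKVg.
move=> a; apply/ffunP => i; rewrite ffunE /=.
case h: (odd i); rewrite !ffunE ?mulKg;
  by rewrite -[in RHS](half_odd i) h.
Qed.

Lemma kmap_in (n : nat) (p : {ffun 'I_n -> gT} * {ffun 'I_n -> gT}) :
  (kmap p \in tuples_in G (2 * n)) = (p.1 \in tuples_in G n) && (p.2 \in tuples_in G n).
Proof.
rewrite !inE; apply/forallP/andP => [h|[/forallP h1 /forallP h2] i].
  split; apply/forallP => t.
    by have := groupM (h (ev t)) (h (od t)); rewrite kmap_ev kmap_od mulKVg.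
  by have := h (ev t); rewrite kmap_ev.
by rewrite ffunE; case: (odd i); rewrite ?groupM ?groupV.
Qed.

Lemma kmap_seq (n : nat) (p : {ffun 'I_n -> gT} * {ffun 'I_n -> gT}) :
  Defs.seqprod (kmap p) = Defs.seqprod p.1.
Proof.
rewrite /Defs.seqprod prod_pairs; apply: eq_bigr => t _.
by rewrite kmap_ev kmap_od mulKVg.
Qed.

Lemma kmap_rev (n : nat) (p : {ffun 'I_n -> gT} * {ffun 'I_n -> gT}) : revprod (kmap p) =
  (\prod_(t < n) (p.1 (rev_ord t) ^ p.2 (rev_ord t)))%g.
Proof.
rewrite /revprod prod_pairs; apply: eq_bigr => t _.
by rewrite rev_ev rev_od kmap_ev kmap_od conjgE mulgA.
Qed.

Lemma stepA n :
  #|[set a in tuples_in G (2 * n) | revprod a == Defs.seqprod a]| =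
  \sum_(x in tuples_in G n) Rc G x (Defs.seqprod x).
Proof.
rewrite (card_bij (fun a => (a \in tuples_in G (2 * n)) && (revprod a == Defs.seqprod a)) (@kmap_bij n)).
rewrite -(card_pair (fun x => x \in tuples_in G n)
   (fun x u => (u \in tuples_in G n) &&
      ((\prod_(t < n) (x (rev_ord t) ^ u (rev_ord t)))%g == Defs.seqprod x))).
congr #|pred_of_set _|; apply/setP => p; rewrite in_set [in RHS]in_set.
by rewrite kmap_in kmap_seq kmap_rev andbA.
Qed.

End StepA.

Section FL.
Variables (gT : finGroupType) (G : {group gT}).

Lemma conj_fix_cent (y z : gT) : ((y ^ z)%g == y) = (z \in 'C[y])%g.
Proof.
rewrite cent1E conjgE; apply/eqP/eqP => h.
  by rewrite -{1}h mulKVg.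
by rewrite -h mulKg.
Qed.

Lemma conj_eq_cent (y c d : gT) :
  ((y ^ c)%g == (y ^ d)%g) = ((c * d^-1)%g \in 'C[y])%g.
Proof.
rewrite -conj_fix_cent -[(y ^ c)%g](conjgKV d) -(conjgM y c (d^-1)%g).
by rewrite (inj_eq (@conjg_inj _ d)).
Qed.

Lemma card_fiber (y w : gT) : y \in G -> w \in (y ^: G)%g ->
  #|(y ^: G)%g| * #|[set c in G | (y ^ c)%g == w]| = #|G|.
Proof.
move=> yG /imsetP [d dG ->].
have -> : [set c in G | (y ^ c)%g == (y ^ d)%g] = ('C_G[y] :* d)%g.
  apply/setP => c; rewrite in_set mem_rcoset in_setI groupMr ?groupV //.
  by rewrite conj_eq_cent.
by rewrite card_rcoset -index_cent1 mulnC Lagrange // subsetIl.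
Qed.

Lemma FL (y : gT) (phi : gT -> nat) : y \in G ->
  #|(y ^: G)%g| * \sum_(c in G) phi (y ^ c)%g = #|G| * \sum_(w in (y ^: G)%g) phi w.
Proof.
move=> yG.
rewrite (partition_big (fun c => (y ^ c)%g) (mem (y ^: G)%g)); last first.
  by move=> c cG; exact: memJ_class.
rewrite !big_distrr; apply: eq_bigr => w wC.
rewrite (eq_bigr (fun _ => phi w)); last by move=> c /andP [_ /eqP ->].
rewrite sum_nat_const /= mulnA -(card_fiber yG wC); congr (_ * _ * _).
by apply: eq_card => c; rewrite inE.
Qed.

End FL.

Section StepC.
Variables (gT : finGroupType) (G : {group gT}).

Definition Nc n (C : {ffun 'I_n -> {set gT}}) (g : gT) :=
  #|[set w : {ffun 'I_n -> gT} | [forall t, w t \in C t] && (Defs.seqprod w == g)]|.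

Definition clf n (x : {ffun 'I_n -> gT}) : {ffun 'I_n -> {set gT}} :=
  [ffun t => (x t ^: G)%g].

Lemma Nc_step n (C : {ffun 'I_n.+1 -> {set gT}}) g :
  Nc C g = \sum_(c in C ord_max)
     Nc [ffun j => C (widen_ord (leqnSn n) j)] (g * c^-1)%g.
Proof.
rewrite /Nc (_ : [set w : {ffun 'I_n.+1 -> gT} | _] =
   [set w in prodset (fun t => C t) | Defs.seqprod w == g]); last first.
  by apply/setP => w; rewrite !inE.
rewrite card_split; apply: eq_bigr => c _; apply: eq_card => w.
rewrite !inE /Defs.seqprod big_ord_recr /= ext_max eq_mulgr.
under eq_bigr => i _ do rewrite ext_widen.
congr (_ && _); apply: eq_forallb => j; by rewrite ffunE.
Qed.

Lemma forall_ord0 (P : pred 'I_0) : [forall t, P t].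
Proof. by apply/forallP => [[]]. Qed.

Lemma C1 n (x : {ffun 'I_n -> gT}) g : (forall t, x t \in G) ->
  (\prod_(t < n) #|(x t ^: G)%g|) * Fc G x g = #|G| ^ n * Nc (clf x) g.
Proof.
elim: n x g => [|n IH] x g xG.
  rewrite big_ord0 expn0 !mul1n; apply: eq_card => b.
  by rewrite !inE !forall_ord0 /Defs.seqprod !big_ord0.
have xr : forall t, restr x t \in G by move=> t; rewrite ffunE.
rewrite Fc_step Nc_step big_ord_recr /= mulnAC big_distrr /=.
rewrite (eq_bigr (fun c => #|G| ^ n *
    Nc (clf (restr x)) (g * (x ord_max ^ c)^-1)%g)); last first.
  move=> c _; rewrite -IH //; congr (_ * _).
  by apply: eq_bigr => t _; rewrite ffunE.
rewrite -big_distrr /= -mulnA (mulnC _ #|(x ord_max ^: G)%g|) (FL (fun w => Nc (clf (restr x)) (g * w^-1)%g)) //.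
rewrite expnS -[in RHS]mulnA mulnCA; congr (_ * (_ * _)).
rewrite {2}/clf ffunE.
apply: eq_bigr => w _; congr Nc.
by apply/ffunP => j; rewrite !ffunE.
Qed.

End StepC.

Section Final.
Variables (gT : finGroupType) (G : {group gT}).

Definition isCl n (C : {ffun 'I_n -> {set gT}}) := [forall t, C t \in classes G].

Lemma class_in (C : {set gT}) y : C \in classes G -> y \in C ->
  (y \in G) /\ (y ^: G)%g = C.
Proof.
move=> /imsetP [z zG ->] yC; split; last exact/class_eqP.
by move: yC => /imsetP [k kG ->]; rewrite groupJ.
Qed.

Lemma clf_eq n (C : {ffun 'I_n -> {set gT}}) x : isCl C ->
  (x \in tuples_in G n) && (clf G x == C) = [forall t, x t \in C t].
Proof.
move=> /forallP hC; apply/andP/forallP => [[_ /eqP <-] t|h].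
  by rewrite ffunE class_refl.
split; first by rewrite inE; apply/forallP => t; case: (class_in (hC t) (h t)).
by apply/eqP/ffunP => t; rewrite ffunE; case: (class_in (hC t) (h t)).
Qed.

Definition reprf n (C : {ffun 'I_n -> {set gT}}) : {ffun 'I_n -> gT} :=
  [ffun t => repr (C t)].

Lemma reprf_in n (C : {ffun 'I_n -> {set gT}}) t : isCl C ->
  (reprf C t \in G) /\ clf G (reprf C) = C.
Proof.
move=> /forallP hC; split.
  by rewrite ffunE; case/repr_classesP: (hC t).
apply/ffunP => s; rewrite !ffunE; case/repr_classesP: (hC s) => _ h; by rewrite -h.
Qed.

Lemma Nc_conj n (C : {ffun 'I_n -> {set gT}}) g k : isCl C -> k \in G ->
  Nc C (g ^ k)%g = Nc C g.
Proof.
move=> hC kG.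
have xG : forall t, reprf C t \in G by move=> t; case: (reprf_in t hC).
have hcl : clf G (reprf C) = C by case: n C hC xG => [|n] C hC xG;
  [apply/ffunP => [[]] | case: (reprf_in ord0 hC)].
have := C1 g xG; have := C1 (g ^ k)%g xG; rewrite hcl => e1 e2.
have pos : 0 < #|G| ^ n by rewrite expn_gt0 cardG_gt0.
apply/eqP; rewrite -(eqn_pmul2l pos) -e1 -e2.
have e3 : Fc G (reprf C) (g ^ k)%g = Fc G (reprf C) g :=
  @Gc_conj _ G n (fun t => t) (reprf C) g k kG.
by rewrite e3.
Qed.

Lemma sumN n (C : {ffun 'I_n -> {set gT}}) : isCl C ->
  \sum_(x : {ffun 'I_n -> gT} | [forall t, x t \in C t]) Nc C (Defs.seqprod x) =
  \sum_(D in classes G) #|D| * Nc C (repr D) ^ 2.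
Proof.
move=> hC.
rewrite (partition_big (fun x => Defs.seqprod x) (mem G)); last first.
  move=> x /forallP hx; apply: group_prod => t _.
  by case: (class_in ((forallP hC) t) (hx t)).
rewrite (eq_bigr (fun g => Nc C g * Nc C g)); last first.
  move=> g _; rewrite (eq_bigr (fun _ => Nc C g)); last by move=> x /andP [_ /eqP ->].
  by rewrite sum_nat_const; congr (_ * _); apply: eq_card => x; rewrite !inE.
rewrite (partition_big (fun g => (g ^: G)%g) (mem (classes G))); last first.
  by move=> g gG; exact: mem_classes.
apply: eq_bigr => D DC.
rewrite (eq_bigl (mem D)); last first.
  move=> g /=; apply/andP/idP => [[gG /eqP <-]|gD]; first exact: class_refl.
  by case: (class_in DC gD) => -> ->.
rewrite (eq_bigr (fun _ => Nc C (repr D) ^ 2)); first by rewrite sum_nat_const.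
move=> g gD; case/repr_classesP: DC => rG hD.
have : g \in (repr D ^: G)%g by rewrite -hD.
case/imsetP => k kG ->.
by rewrite Nc_conj // mulnn.
Qed.

End Final.

Section Block.
Variables (gT : finGroupType) (G : {group gT}).

Lemma blockC n (C : {ffun 'I_n -> {set gT}}) : isCl G C ->
  (\prod_(t < n) #|C t|) *
    \sum_(x in tuples_in G n | clf G x == C) Fc G x (Defs.seqprod x) =
  #|G| ^ n * \sum_(D in classes G) #|D| * Nc C (repr D) ^ 2.
Proof.
move=> hC; rewrite big_distrr /=.
rewrite (eq_bigr (fun x => #|G| ^ n * Nc C (Defs.seqprod x))); last first.
  move=> x /andP [xT /eqP hx].
  have xG : forall t, x t \in G by move=> t; move: xT; rewrite inE => /forallP.
  rewrite -hx -C1 //; congr (_ * _); apply: eq_bigr => t _; by rewrite ffunE.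
rewrite -big_distrr /=; congr (_ * _); rewrite -sumN //.
by apply: eq_bigl => x; rewrite clf_eq.
Qed.

End Block.

Unset Implicit Arguments.
Theorem mainTheorem11 (gT : finGroupType) (G : {group gT}) (n : nat) :
  (0 < n)%N ->
  revProbability G n =
    ((\sum_(x in tuples_in G n) #|StabProd G x|)%:R / (#|G| ^ (2 * n))%:R)%R
  /\
  revProbability G n =
    (\sum_(C : {ffun 'I_n -> {set gT}} | [forall t, C t \in classes G])
       \sum_(D in classes G)
         ((#|D| * classProdCount C D ^ 2)%:R
          / ((\prod_(t < n) #|C t|) * #|G| ^ n)%:R))%R.
Proof.
move=> _.
have E : #|[set a in tuples_in G (2 * n) | revprod a == Defs.seqprod a]| =
         \sum_(x in tuples_in G n) Fc G x (Defs.seqprod x).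
  rewrite stepA; apply: eq_bigr => x xT; apply: Rc_Fc => t.
  by move: xT; rewrite inE => /forallP.
rewrite /revProbability E; split; first by [].
rewrite (partition_big (@clf gT G n) (@isCl gT G n)); last first.
  by move=> x xT; apply/forallP => t; rewrite ffunE mem_classes //;
     move: xT; rewrite inE => /forallP.
rewrite GRing.natr_sum GRing.mulr_suml; apply: eq_bigr => C hC.
rewrite -GRing.mulr_suml -GRing.natr_sum.
set S := \sum_(x in _ | _) _.
set K := \sum_(D in classes G) _.
have hP : (0 < \prod_(t < n) #|C t|)%N.
  apply: prodn_gt0 => t; rewrite card_gt0.
  by case/repr_classesP: ((forallP hC) t) => rG ->; apply/set0Pn; exists (repr (C t)); rewrite class_refl.
have hg : (0 < #|G| ^ n)%N by rewrite expn_gt0 cardG_gt0.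
have hb := blockC hC.
have -> : #|G| ^ (2 * n) = (#|G| ^ n * #|G| ^ n)%N by rewrite mul2n -addnn expnD.
have hS : (S%:R = (#|G| ^ n)%:R * K%:R / (\prod_(t < n) #|C t|)%:R :> rat)%R.
  rewrite -GRing.natrM -hb GRing.natrM GRing.mulrC GRing.mulKf //.
  by rewrite Num.Theory.pnatr_eq0 -lt0n.
rewrite hS !GRing.natrM; field.
by rewrite !Num.Theory.pnatr_eq0 -!lt0n hP hg.
Qed.
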